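(* There is no homomorphism $G^2 \to G^1$.
   Context: Graphs are simple and loopless; homomorphisms are edge-preserving vertex maps. $G^1$ is the graph with vertex set $\omega\times\{0,1\}$ whose edges are all pairs $\{(n,i),(m,i)\}$ with $n\ne m$, $i\in\{0,1\}$ and $\lfloor\sqrt n\rfloor=\lfloor\sqrt m\rfloor$, together with all pairs $\{(n,0),(m,1)\}$ with $n<m$. $G^2$ is the graph with vertex set $\{r\}\cup A_1\cup A_2$ (pairwise disjoint), where $A_1$ is the disjoint union of complete graphs $K^1_i$ on $i$ vertices ($i\ge1$) and $A_2$ is the disjoint union of complete graphs $K^2_{x,j}$ on $j$ vertices for $x\in A_1$, $j\ge 1$. The edges of $G^2$ are the edges of all these complete graphs, all pairs $\{r,x\}$ with $x\in A_1$, and all pairs $\{x,y\}$ with $x\in A_1$ and $y\in V(K^2_{x,j})$ for some $j$. *)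

(* Defs.v *)
From mathcomp Require Import all_boot.
Set Implicit Arguments. Unset Strict Implicit. Unset Printing Implicit Defensive.

Definition is_hom (V W : Type) (EV : V -> V -> Prop) (EW : W -> W -> Prop)
  (f : V -> W) : Prop := forall u v, EV u v -> EW (f u) (f v).

(* ---------- G^1 : vertices omega x {0,1}; the bool false = 0, true = 1 ---------- *)
Definition V1 := (nat * bool)%type.

Definition E1 (x y : V1) : Prop :=
  let (n, i) := x in let (m, j) := y in
  (i = j /\ n <> m /\ Nat.sqrt n = Nat.sqrt m)
  \/ (i = false /\ j = true /\ (n < m)%coq_nat)
  \/ (j = false /\ i = true /\ (m < n)%coq_nat).

(* ---------- G^2 ----------
   root          = r
   a1 k a        = vertex a of the complete graph K^1_{k+1}   (a : 'I_(k+1))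
   a2 k a l b    = vertex b of K^2_{x, l+1} where x = a1 k a  (b : 'I_(l+1)) *)
Inductive V2 : Type :=
  | root : V2
  | a1 (k : nat) (a : 'I_k.+1) : V2
  | a2 (k : nat) (a : 'I_k.+1) (l : nat) (b : 'I_l.+1) : V2.

(* one orientation of each edge *)
Definition adj2 (u v : V2) : Prop :=
  match u, v with
  | root, a1 _ _ => True
  | a1 k a, a1 k' a' => k = k' /\ nat_of_ord a <> nat_of_ord a'
  | a2 k a l b, a2 k' a' l' b' =>
      k = k' /\ nat_of_ord a = nat_of_ord a' /\ l = l' /\
      nat_of_ord b <> nat_of_ord b'
  | a1 k a, a2 k' a' _ _ => k = k' /\ nat_of_ord a = nat_of_ord a'
  | _, _ => False
  end.

Definition E2 (u v : V2) : Prop := adj2 u v \/ adj2 v u.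

(* Main.v *)
Require Import Defs.
From mathcomp Require Import all_boot.
From mathcomp Require Import zify.
From Stdlib Require Import Lia.
From Stdlib Require PeanoNat.

Lemma E1_irr x : ~ E1 x x.
Proof. case: x => n i /=; lia. Qed.

Lemma sq_bound n : (n < (Nat.sqrt n).+1 ^ 2)%N.
Proof. have [_ H] := PeanoNat.Nat.sqrt_spec n (le_0_n n). rewrite expnS expn1. lia. Qed.

Lemma bnd c y : E1 c y -> c.2 = true \/ y.2 = false -> (y.1 < (c.1.+1)^2)%N.
Proof.
case: c => q i; case: y => n j /= H H2.
have Hq := sq_bound q; have Hn := sq_bound n.
have Hs := PeanoNat.Nat.sqrt_le_lin q.
have Hmono : ((Nat.sqrt q).+1 ^ 2 <= q.+1 ^ 2)%N.
  by rewrite leq_exp2r //; apply/leP; lia.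
case: H => [[? [? E]]|[[? [? ?]]|[? [? ?]]]]; subst.
- rewrite -E in Hn. exact: leq_trans Hn Hmono.
- by case: H2.
- apply: (@leq_trans q.+1); last exact: leq_trans Hq Hmono. apply/leP; lia.
Qed.

Lemma clique c (K : nat) (g : 'I_K.+1 -> V1) :
  (forall a b : 'I_K.+1, a <> b -> E1 (g a) (g b)) ->
  (forall a, E1 c (g a)) -> (forall a, c.2 = true \/ (g a).2 = false) ->
  (K.+1 <= (c.1.+1)^2 * 2)%N.
Proof.
move=> Hcl Hc Hs.
pose N := (c.1.+1)^2.
have HB a : ((g a).1 < N)%N by exact: bnd (Hc a) (Hs a).
pose h (a : 'I_K.+1) : ('I_N * bool)%type := (Ordinal (HB a), (g a).2).
have hinj : injective h.
  move=> a b [Ea Eb].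
  case: (a =P b) => // Hab; exfalso.
  have Hg : g a = g b by move: (g a) (g b) Ea Eb => [? ?] [? ?] /= -> ->.
  by have := Hcl a b Hab; rewrite Hg; apply: E1_irr.
have := leq_card h hinj.
by rewrite card_prod !card_ord card_bool.
Qed.

Theorem claim2 : ~ exists f : V2 -> V1, is_hom E2 E1 f.
Proof.
move=> [f Hf].
have side v : (forall K : nat, exists g : 'I_K.+1 -> V2,
   (forall a b, a <> b -> E2 (g a) (g b)) /\ forall a, E2 v (g a)) ->
   (f v).2 = false.
  move=> Hv; case Efv: (f v).2 => //.
  have [g [Hg1 Hg2]] := Hv ((f v).1.+1 ^ 2 * 2)%N.
  have := @clique (f v) _ (fun a => f (g a)).
  move=> /(_ (fun a b H => Hf _ _ (Hg1 a b H)) (fun a => Hf _ _ (Hg2 a))).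
  by move=> /(_ (fun a => or_introl Efv)); rewrite ltnn.
have Hr : (f Defs.root).2 = false.
  apply: side => K; exists (@a1 K); split.
    by move=> a b Hab; left; split => //; move=> /val_inj.
  by move=> a; left.
have Ha k a : (f (@a1 k a)).2 = false.
  apply: side => K; exists (@a2 k a K); split.
    by move=> x y Hab; left; split => //; split => //; split => //; move=> /val_inj.
  by move=> x; left.
pose K := ((f Defs.root).1.+1 ^ 2 * 2)%N.
suff : (K < K)%N by rewrite ltnn.
apply: (@clique (f Defs.root) K (fun a => f (@a1 K a))).
- by move=> a b H; apply: Hf; left; split => // /val_inj.
- by move=> a; apply: Hf; left.
- by move=> a; right; apply: Ha.
Qed.
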